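(* Let $a_1,\dots,a_n\in\mathbb{F}$ be pairwise non-$(\sigma,\delta)$-conjugate and $r_1,\dots,r_n\in\mathbb{Z}_+$. If $F\in\mathbb{F}[x;\sigma,\delta]$ is non-zero and $(x-a_i)^{r_i}$ divides $F$ on the right for $i=1,\dots,n$, then $$\sum_{i=1}^n r_i\le\deg(F).$$ Furthermore, equality holds if and only if $F=cF_\Omega$ with $c\in\mathbb{F}^*$, where $F_\Omega$ is the monic least left common multiple of $(x-a_1)^{r_1},\dots,(x-a_n)^{r_n}$.
   Context: Let $\mathbb{F}$ be a division ring, $\sigma$ a ring endomorphism of $\mathbb{F}$ and $\delta$ a $\sigma$-derivation; $\mathbb{F}[x;\sigma,\delta]$ is the skew polynomial ring with $xa=\sigma(a)x+\delta(a)$ (a domain with additive degree and right Euclidean division). Elements $a,b\in\mathbb{F}$ are $(\sigma,\delta)$-conjugate if $b=\sigma(\beta)a\beta^{-1}+\delta(\beta)\beta^{-1}$ for some $\beta\in\mathbb{F}^*$. *)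

(* Defs.v *)
From HB Require Import structures.
From mathcomp Require Import all_boot all_order all_algebra.
Set Implicit Arguments. Unset Strict Implicit. Unset Printing Implicit Defensive.
Import GRing.Theory.
Local Open Scope ring_scope.

Section Skew.
Variable R : unitRingType.

Definition is_division_ring : Prop := forall x : R, x != 0 -> x \is a GRing.unit.

(* delta is a sigma-derivation, with the convention  x a = sigma(a) x + delta(a),
   i.e. delta(a + b) = delta a + delta b and delta(a b) = sigma(a) delta(b) + delta(a) b. *)
Definition is_sigma_derivation (s : R -> R) (d : R -> R) : Prop :=
  (forall a b, d (a + b) = d a + d b) /\
  (forall a b, d (a * b) = s a * d b + d a * b).

(* Elements of F[x;sigma,delta] are represented by their coefficient lists
   ({poly R}, p = \sum_i p_i x^i with coefficients on the left).
   xmul q computes x * q in the skew ring: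
   x * (\sum c_k x^k) = \sum (sigma(c_k) x^(k+1) + delta(c_k) x^k). *)
Definition xmul (s d : R -> R) (q : {poly R}) : {poly R} :=
  map_poly s q * 'X + map_poly d q.

Definition smul (s d : R -> R) (p q : {poly R}) : {poly R} :=
  \sum_(i < size p) (p`_i)%:P * iter i (xmul s d) q.

Definition spow (s d : R -> R) (p : {poly R}) (n : nat) : {poly R} :=
  iter n (fun P => smul s d P p) 1.

Definition rdvd (s d : R -> R) (G F : {poly R}) : Prop :=
  exists Q : {poly R}, F = smul s d Q G.

Definition sdeg (p : {poly R}) : nat := (size p).-1.

Definition sd_conj (s d : R -> R) (a b : R) : Prop :=
  exists2 beta : R, beta != 0 & b = s beta * a * beta^-1 + d beta * beta^-1.

Definition is_monic_llcm (s d : R -> R) (n : nat) (gs : 'I_n -> {poly R})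
  (L : {poly R}) : Prop :=
  L \is monic /\ (forall i, rdvd s d (gs i) L) /\
  (forall M, (forall i, rdvd s d (gs i) M) -> rdvd s d L M).

End Skew.

(* Main.v *)
Require Import Defs.
From HB Require Import structures.
From mathcomp Require Import all_boot all_order all_algebra zify.
From Stdlib Require Import Classical.
Set Implicit Arguments. Unset Strict Implicit. Unset Printing Implicit Defensive.
Import GRing.Theory.
Local Open Scope ring_scope.

Section Skew.
Variable R : unitRingType.
Hypothesis HR : is_division_ring R.
Variable s : {rmorphism R -> R}.
Variable d : R -> R.
Hypothesis Hd : is_sigma_derivation s d.

Local Notation xm := (xmul s d).
Local Notation sm := (smul s d).

Lemma dD a b : d (a + b) = d a + d b. Proof. by case: Hd. Qed.
Lemma dM a b : d (a * b) = s a * d b + d a * b. Proof. by case: Hd. Qed.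
Lemma d0 : d 0 = 0.
Proof. by have := dD 0 0; rewrite addr0 => /eqP; rewrite -subr_eq subrr => /eqP. Qed.
Lemma dN a : d (- a) = - d a.
Proof. by apply/eqP; rewrite -subr_eq0 opprK -dD addNr d0. Qed.
Lemma dB a b : d (a - b) = d a - d b. Proof. by rewrite dD dN. Qed.
Lemma d1 : d 1 = 0.
Proof.
have := dM 1 1; rewrite mulr1 rmorph1 mul1r => /eqP.
by rewrite mulr1 -subr_eq subrr => /eqP.
Qed.

Lemma unitP (x : R) : x != 0 -> x \is a GRing.unit. Proof. exact: HR. Qed.

Lemma mul_eq0 (x y : R) : x * y = 0 -> x = 0 \/ y = 0.
Proof.
move=> h; case: (eqVneq x 0) => [->|nx]; first by left.
by right; rewrite -(mulKr (unitP nx) y) h mulr0.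
Qed.
Lemma mul_neq0 (x y : R) : x != 0 -> y != 0 -> x * y != 0.
Proof. by move=> nx ny; apply/eqP => /mul_eq0 [] /eqP; rewrite ?(negPf nx) ?(negPf ny). Qed.

Lemma s_neq0 (x : R) : x != 0 -> s x != 0.
Proof.
move=> nx; apply/eqP => h.
have : s x * s x^-1 = 1 by rewrite -rmorphM mulrV ?rmorph1 // unitP.
by rewrite h mul0r => /eqP; rewrite eq_sym oner_eq0.
Qed.

Lemma iters_neq0 k (x : R) : x != 0 -> iter k s x != 0.
Proof. by move=> nx; elim: k => //= k IH; exact: s_neq0. Qed.

Lemma coef_xm (q : {poly R}) i : (xm q)`_i = (if i == 0%N then 0 else s q`_i.-1) + d q`_i.
Proof. by rewrite /xmul coefD coefMX !coef_map_id0 ?rmorph0 ?d0. Qed.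

Lemma xmD (p q : {poly R}) : xm (p + q) = xm p + xm q.
Proof.
apply/polyP => i; rewrite coefD !coef_xm !coefD dD.
case: (i == 0%N); rewrite ?add0r ?rmorphD // addrACA //.
Qed.
Lemma xm0 : xm 0 = 0.
Proof. by apply/polyP => i; rewrite coef_xm !coef0 rmorph0 d0; case: (i==0%N); rewrite !addr0. Qed.
Lemma xmN (p : {poly R}) : xm (- p) = - xm p.
Proof. by apply/eqP; rewrite -subr_eq0 opprK -xmD addNr xm0. Qed.
Lemma xmB (p q : {poly R}) : xm (p - q) = xm p - xm q. Proof. by rewrite xmD xmN. Qed.

Lemma itxD k (p q : {poly R}) : iter k xm (p + q) = iter k xm p + iter k xm q.
Proof. by elim: k => //= k ->; rewrite xmD. Qed.
Lemma itx0 k : iter k xm 0 = 0.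
Proof. by elim: k => //= k ->; rewrite xm0. Qed.
Lemma itxN k (p : {poly R}) : iter k xm (- p) = - iter k xm p.
Proof. by elim: k => //= k ->; rewrite xmN. Qed.

Lemma xmC (c : R) (u : {poly R}) : xm (c%:P * u) = (s c)%:P * xm u + (d c)%:P * u.
Proof.
apply/polyP => i; rewrite coef_xm coefD !coefCM coef_xm mulrDr dM.
case: (i == 0%N); rewrite ?mulr0 ?add0r ?addr0 ?rmorphM ?addrA //.
Qed.

Lemma dnat (b : bool) : d (b%:R) = 0.
Proof. by case: b; rewrite ?d1 ?d0. Qed.

Lemma xmXn k : xm 'X^k = 'X^(k.+1) :> {poly R}.
Proof.
apply/polyP => i; rewrite coef_xm !coefXn dnat addr0.
by case: i => [|i] //=; rewrite eqSS rmorph_nat.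
Qed.

Lemma itxXn i k : iter i xm 'X^k = 'X^(i + k) :> {poly R}.
Proof. by elim: i => //= i ->; rewrite xmXn. Qed.

Lemma smulE N (p q : {poly R}) : (size p <= N)%N ->
  sm p q = \sum_(i < N) (p`_i)%:P * iter i xm q.
Proof.
move=> hN; rewrite /smul (big_ord_widen _ (fun i => (p`_i)%:P * iter i xm q) hN).
rewrite big_mkcond /=; apply: eq_bigr => i _.
by case: ifP => // /negbT; rewrite -leqNgt => /(nth_default 0) ->; rewrite mul0r.
Qed.

Lemma smulDl (p q r : {poly R}) : sm (p + q) r = sm p r + sm q r.
Proof.
rewrite !(@smulE (maxn (size p) (size q))) ?leq_maxl ?leq_maxr ?size_polyD //.
by rewrite -big_split; apply: eq_bigr => i _; rewrite coefD polyCD mulrDl.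
Qed.
Lemma smul0l (r : {poly R}) : sm 0 r = 0.
Proof. by rewrite /smul size_poly0 big_ord0. Qed.
Lemma smulNl (p r : {poly R}) : sm (- p) r = - sm p r.
Proof. by apply/eqP; rewrite -subr_eq0 opprK -smulDl addNr smul0l. Qed.
Lemma smulBl (p q r : {poly R}) : sm (p - q) r = sm p r - sm q r. Proof. by rewrite smulDl smulNl. Qed.

Lemma smulCl (c : R) (p r : {poly R}) : sm (c%:P * p) r = c%:P * sm p r.
Proof.
rewrite !(@smulE (size p)) //; last first.
  by apply/leq_sizeP => j hj; rewrite coefCM nth_default ?mulr0.
by rewrite mulr_sumr; apply: eq_bigr => i _; rewrite coefCM polyCM mulrA.
Qed.

Lemma smulXn k (r : {poly R}) : sm 'X^k r = iter k xm r.
Proof.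
rewrite /smul size_polyXn big_ord_recr /= big1 ?add0r; last first.
  by move=> i _; rewrite coefXn /= (ltn_eqF (ltn_ord i)) polyC0 mul0r.
by rewrite coefXn eqxx mul1r.
Qed.

Lemma smulC (c : R) (r : {poly R}) : sm c%:P r = c%:P * r.
Proof. by have := smulCl c 1 r; rewrite mulr1 (smulXn 0) /=. Qed.

Lemma smul_suml I (l : seq I) (P : pred I) (F : I -> {poly R}) (r : {poly R}) :
  sm (\sum_(i <- l | P i) F i) r = \sum_(i <- l | P i) sm (F i) r.
Proof.
elim/big_rec2: _ => [|i y p _ <-]; first by rewrite smul0l.
by rewrite smulDl.
Qed.

Lemma smulDr (p q r : {poly R}) : sm p (q + r) = sm p q + sm p r.
Proof. by rewrite /smul -big_split; apply: eq_bigr => i _; rewrite itxD mulrDr. Qed.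
Lemma smul0r (p : {poly R}) : sm p 0 = 0.
Proof. by rewrite /smul big1 // => i _; rewrite itx0 mulr0. Qed.
Lemma smulNr (p q : {poly R}) : sm p (- q) = - sm p q.
Proof. by rewrite /smul -sumrN; apply: eq_bigr => i _; rewrite itxN mulrN. Qed.
Lemma smulBr (p q r : {poly R}) : sm p (q - r) = sm p q - sm p r. Proof. by rewrite smulDr smulNr. Qed.

Lemma polyE (p : {poly R}) : p = \sum_(i < size p) (p`_i)%:P * 'X^i.
Proof.
by rewrite -[p in LHS]coefK poly_def; apply: eq_bigr => i _; rewrite mul_polyC.
Qed.

Lemma smul1r (p : {poly R}) : sm p 1 = p.
Proof.
rewrite {2}[p]polyE /smul; apply: eq_bigr => i _.
by rewrite -(expr0 'X) itxXn addn0.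
Qed.
Lemma smul1l (p : {poly R}) : sm 1 p = p.
Proof. by rewrite (smulC 1) mul1r. Qed.

Lemma xm_smul (q r : {poly R}) : xm (sm q r) = sm (xm q) r.
Proof.
have -> : xm q = \sum_(i < size q) ((s q`_i)%:P * 'X^(i.+1) + (d q`_i)%:P * 'X^i).
  rewrite {1}[q]polyE; elim/big_rec2: _ => [|i y p _ <-]; first by rewrite xm0.
  by rewrite xmD xmC xmXn.
rewrite smul_suml [sm q r]/smul; elim/big_rec2: _ => [|i y p _ <-]; first by rewrite xm0.
by rewrite xmD xmC smulDl !smulCl !smulXn.
Qed.

Lemma itx_smul k (q r : {poly R}) : iter k xm (sm q r) = sm (iter k xm q) r.
Proof. by elim: k => //= k ->; rewrite xm_smul. Qed.

Lemma smulA (p q r : {poly R}) : sm p (sm q r) = sm (sm p q) r.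
Proof.
rewrite [sm p q]/smul smul_suml /smul; apply: eq_bigr => i _.
by rewrite itx_smul -smulCl.
Qed.


Lemma s_inj : injective s.
Proof.
move=> x y h; apply/eqP; rewrite -subr_eq0; case: (eqVneq (x - y) 0) => // nz.
by have := s_neq0 nz; rewrite (rmorphB s) h subrr eqxx.
Qed.

Lemma lreg_of (c : R) : c != 0 -> GRing.lreg c.
Proof. by move=> nc; apply: mulrI; exact: unitP. Qed.

Lemma size_Cmul' (c : R) (u : {poly R}) : c != 0 -> size (c%:P * u) = size u.
Proof. by move=> nc; rewrite mul_polyC (lreg_size _ (lreg_of nc)). Qed.
Lemma lead_Cmul (c : R) (u : {poly R}) : c != 0 -> lead_coef (c%:P * u) = c * lead_coef u.
Proof. by move=> nc; rewrite mul_polyC (lead_coef_lreg _ (lreg_of nc)). Qed.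
Lemma size_Cmul_le (c : R) (u : {poly R}) : (size (c%:P * u)%R <= size u)%N.
Proof. by rewrite mul_polyC size_scale_leq. Qed.

Lemma size_map_d (q : {poly R}) : (size (map_poly d q) <= size q)%N.
Proof. by apply/leq_sizeP => j hj; rewrite coef_map_id0 ?d0 // nth_default ?d0. Qed.

Lemma size_xm (q : {poly R}) : q != 0 ->
  size (xm q) = (size q).+1 /\ lead_coef (xm q) = s (lead_coef q).
Proof.
move=> nq.
have hs : size (map_poly s q) = size q by rewrite size_map_inj_poly ?rmorph0 //; exact: s_inj.
have nm : map_poly s q != 0 by rewrite -size_poly_eq0 hs size_poly_eq0.
have h1 : size (map_poly s q * 'X) = (size q).+1 by rewrite size_mulX // hs.
have h2 : (size (map_poly d q) < size (map_poly s q * 'X)%R)%N by rewrite h1 ltnS size_map_d.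
rewrite /xmul size_polyDl // lead_coefDl // lead_coefMX lead_coef_map_id0 ?rmorph0 //.
by apply: s_neq0; rewrite lead_coef_eq0.
Qed.

Lemma size_itx k (q : {poly R}) : q != 0 ->
  size (iter k xm q) = (size q + k)%N /\ lead_coef (iter k xm q) = iter k s (lead_coef q).
Proof.
move=> nq; elim: k => [|k [IH1 IH2]] /=; first by rewrite addn0.
have nz : iter k xm q != 0 by rewrite -size_poly_eq0 IH1 addn_eq0 size_poly_eq0 (negPf nq).
by have [-> ->] := size_xm nz; rewrite IH1 IH2 addnS.
Qed.

Lemma size_smul (p q : {poly R}) : p != 0 -> q != 0 ->
  size (sm p q) = (size p + size q).-1 /\
  lead_coef (sm p q) = lead_coef p * iter (size p).-1 s (lead_coef q).
Proof.
move=> np nq; set m := (size p).-1.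
have hp : size p = m.+1 by rewrite /m -polySpred.
have hq : (0 < size q)%N by rewrite size_poly_gt0.
have nl : p`_m != 0 by rewrite -lead_coef_eq0 in np; rewrite /lead_coef -/m in np.
have [hT1 hT2] := size_itx m nq.
have hT : size ((p`_m)%:P * iter m xm q) = (size q + m)%N by rewrite size_Cmul'.
have hS : (size (\sum_(i < m) (p`_(widen_ord (leqnSn m) i))%:P * iter i xm q)%R < size q + m)%N.
  apply: leq_ltn_trans (size_sum _ _ _) _.
  apply: (big_ind (fun x => x < size q + m)%N) => //.
  - by rewrite addn_gt0 hq.
  - by move=> x y hx hy; rewrite gtn_max hx hy.
  move=> i _; apply: leq_ltn_trans (size_Cmul_le _ _) _.
  by have [-> _] := size_itx i nq; rewrite ltn_add2l.
rewrite /smul hp big_ord_recr /= addrC size_polyDl ?hT // lead_coefDl ?hT //.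
rewrite lead_Cmul // hT2 /lead_coef hp /=; split => //; lia.
Qed.

Lemma smul_neq0 (p q : {poly R}) : p != 0 -> q != 0 -> sm p q != 0.
Proof.
move=> np nq; have [h _] := size_smul np nq.
rewrite -size_poly_eq0 h; move: np nq; rewrite -!size_poly_gt0; lia.
Qed.

Lemma smul_eq0 (p q : {poly R}) : sm p q = 0 -> p = 0 \/ q = 0.
Proof.
case: (eqVneq p 0) => [->|np]; first by left.
case: (eqVneq q 0) => [->|nq]; first by right.
by move=> h; have := smul_neq0 np nq; rewrite h eqxx.
Qed.

Lemma smul_cancel (A B P : {poly R}) : P != 0 -> sm A P = sm B P -> A = B.
Proof.
move=> nP h; have : sm (A - B) P = 0 by rewrite smulBl h subrr.
by case/smul_eq0 => [/eqP|/eqP]; rewrite ?subr_eq0 ?(negPf nP) // => /eqP.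
Qed.

Lemma size_smul_ge (p q : {poly R}) : p != 0 -> (size q <= size (sm p q))%N.
Proof.
move=> np; case: (eqVneq q 0) => [->|nq]; first by rewrite size_poly0.
have [-> _] := size_smul np nq; move: np; rewrite -size_poly_gt0; lia.
Qed.

Lemma small_rem (A L Rm : {poly R}) : L != 0 -> sm A L = Rm -> (size Rm < size L)%N -> A = 0.
Proof.
move=> nL h hs; apply/eqP/negPn/negP => nA.
by have := size_smul_ge L nA; rewrite h leqNgt hs.
Qed.

Lemma size_sub_lt (p q : {poly R}) : p != 0 -> size p = size q ->
  lead_coef p = lead_coef q -> (size (p - q)%R < size p)%N.
Proof.
move=> np hs hl; have hp := polySpred np; rewrite hp ltnS.
apply/leq_sizeP => j hj; rewrite coefB.
case: (ltngtP j (size p).-1) => [|hj2|->]; first by rewrite ltnNge hj.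
  by rewrite !nth_default ?subrr // -?hs hp.
have e1 : p`_(size p).-1 = lead_coef p by [].
have e2 : q`_(size p).-1 = lead_coef q by rewrite hs.
by rewrite e1 e2 hl subrr.
Qed.

Lemma sdiv (L M : {poly R}) : L \is monic ->
  exists Q Rm, M = sm Q L + Rm /\ (size Rm < size L)%N.
Proof.
move=> mL; have nL := monic_neq0 mL.
move: {2}(size M) (leqnn (size M)) => k; elim: k M => [|k IH] M hM.
  exists 0, M; rewrite smul0l add0r; split => //.
  by apply: leq_ltn_trans hM _; rewrite size_poly_gt0.
case: (ltnP (size M) (size L)) => hML.
  by exists 0, M; rewrite smul0l add0r.
have nM : M != 0 by rewrite -size_poly_gt0; apply: leq_trans hML; rewrite size_poly_gt0.
set m := (size M - size L)%N.
set T := (lead_coef M)%:P * 'X^m.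
have nlM : lead_coef M != 0 by rewrite lead_coef_eq0.
have hT : sm T L = (lead_coef M)%:P * iter m xm L by rewrite smulCl smulXn.
have [hs hl] := size_itx m nL.
have hs2 : size (sm T L) = size M by rewrite hT size_Cmul' // hs /m; lia.
have hl2 : lead_coef (sm T L) = lead_coef M.
  rewrite hT lead_Cmul // hl (eqP mL).
  suff -> : iter m s 1 = 1 by rewrite mulr1.
  by elim: (m) => //= j ->; rewrite rmorph1.
have := size_sub_lt nM (esym hs2) (esym hl2) => hlt.
have [Q [Rm [h1 h2]]] := IH (M - sm T L) (leq_trans hlt hM).
exists (Q + T), Rm; split => //.
by rewrite smulDl -addrAC -h1 subrK.
Qed.

Lemma sdiv_lin (M : {poly R}) (e : R) :
  exists Q (g : R), M = sm Q ('X - e%:P) + g%:P.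
Proof.
have [Q [Rm [h1 h2]]] := sdiv M (monicXsubC e).
exists Q, Rm`_0; rewrite -size1_polyC //; by move: h2; rewrite size_XsubC.
Qed.


Local Notation cj := (sd_conj s d).

Lemma conj_refl (a : R) : cj a a.
Proof. by exists 1; rewrite ?oner_neq0 // rmorph1 d1 invr1 mul1r mulr1 mul0r addr0. Qed.

Lemma dV (b : R) : b != 0 -> d b^-1 * b = - ((s b)^-1 * d b).
Proof.
move=> nb; have u := unitP nb.
have := dM b^-1 b; rewrite mulVr // d1 (rmorphV _ u) => /eqP.
by rewrite eq_sym addrC addr_eq0 => /eqP.
Qed.

Lemma conj_sym (a b : R) : cj a b -> cj b a.
Proof.
case=> be nb hb; have u := unitP nb; have su := unitP (s_neq0 nb).
exists be^-1; first by rewrite invr_eq0.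
rewrite invrK (rmorphV _ u) (dV nb) hb mulrDr mulrDl !mulrA mulVr // mul1r !mulrVK //.
by rewrite addrK.
Qed.

Lemma conj_trans (a b c : R) : cj a b -> cj b c -> cj a c.
Proof.
case=> be nb hb [ga ng hc]; have ub := unitP nb; have ug := unitP ng.
exists (ga * be); first exact: mul_neq0.
rewrite hc hb rmorphM dM invrM // !mulrDr !mulrDl !mulrA mulrK //.
by rewrite addrA.
Qed.


Lemma quadE (c u : R) : sm ('X - c%:P) ('X - u%:P) =
  'X * 'X - (s u + c)%:P * 'X + (c * u - d u)%:P.
Proof.
rewrite smulBl smulC -{1}(expr1 'X) smulXn /= xmB -{1}(expr1 'X) xmXn.
rewrite -[u%:P]mulr1 xmC -(expr0 'X) xmXn expr1 expr0 !mulr1.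
rewrite expr2 mulrBr -polyCM polyCD polyCB mulrDl !opprD !opprK !addrA.
by rewrite (addrAC _ (- (d u)%:P)) (addrAC _ (- (d u)%:P)).
Qed.


Definition cjx (be x : R) := s be * x * be^-1 + d be * be^-1.

Lemma bprime (e be : R) : be != 0 -> cjx be (e + be) = cjx be e + s be.
Proof.
move=> nb; rewrite /cjx mulrDr mulrDl mulrK ?unitP //.
by rewrite addrAC.
Qed.

Lemma cjx_conj (be x : R) : be != 0 -> cj x (cjx be x).
Proof. by move=> nb; exists be. Qed.

Lemma quad (e be : R) : be != 0 ->
  sm ('X - (cjx be e)%:P) ('X - (e + be)%:P) = sm ('X - (cjx be (e + be))%:P) ('X - e%:P).
Proof.
move=> nb; rewrite !quadE bprime //; set e' := cjx be e.
have he : e' * be = s be * e + d be by rewrite /e' /cjx mulrDl !mulrVK ?unitP.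
congr (_ - _ * _ + _).
  by rewrite (rmorphD s) -addrA (addrC (s be)).
clearbody e'; apply: congr1; rewrite mulrDr he dD opprD mulrDl !addrA.
by rewrite (addrAC _ (d be)) addrK.
Qed.


Local Notation rd := (rdvd s d).

Lemma pass_lin (G : {poly R}) (e be : R) : be != 0 ->
  rd ('X - e%:P) (sm G ('X - (e + be)%:P)) ->
  exists Q2, G = sm Q2 ('X - (cjx be e)%:P) /\
    sm G ('X - (e + be)%:P) = sm (sm Q2 ('X - (cjx be (e + be))%:P)) ('X - e%:P).
Proof.
move=> nb [W hW].
have [Q2 [g hG]] := sdiv_lin G (cjx be e).
have hX : sm G ('X - (e + be)%:P) =
    sm (sm Q2 ('X - (cjx be (e + be))%:P) + g%:P) ('X - e%:P) - (g * be)%:P.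
  rewrite {1}hG smulDl -smulA quad // smulA smulDl smulC smulC.
  by rewrite (polyCD e be) opprD addrA mulrBr polyCM addrA.
have h0 : sm (W - (sm Q2 ('X - (cjx be (e + be))%:P) + g%:P)) ('X - e%:P) = - (g * be)%:P.
  by rewrite smulBl -hW hX addrAC subrr add0r.
have hA : W - (sm Q2 ('X - (cjx be (e + be))%:P) + g%:P) = 0.
  apply: (small_rem (monic_neq0 (monicXsubC e)) h0).
  by rewrite size_polyN size_XsubC (leq_ltn_trans (size_polyC_leq1 _)).
have hg : g = 0.
  rewrite hA smul0l in h0; have := esym h0 => /eqP; rewrite oppr_eq0 polyC_eq0 => /eqP.
  by case/mul_eq0 => // hb; move: nb; rewrite hb eqxx.
exists Q2; split; first by rewrite hG hg addr0.
by rewrite hX hg mul0r subr0 addr0.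
Qed.

Inductive plin (a : R) : nat -> {poly R} -> Prop :=
| plin0 : plin a 0 1
| plinS k P e : plin a k P -> cj a e -> plin a k.+1 (sm P ('X - e%:P)).

Lemma plinS_inv (a : R) k P : plin a k.+1 P ->
  exists P1 e, [/\ plin a k P1, cj a e & P = sm P1 ('X - e%:P)].
Proof. by move=> h; inversion h; subst; exists P0, e. Qed.

Lemma rd_refl1 (G : {poly R}) : rd 1 G.
Proof. by exists G; rewrite smul1r. Qed.

Lemma keyA (a : R) k P : plin a k P -> forall G b, ~ cj a b ->
  rd P (sm G ('X - b%:P)) -> exists P', plin a k P' /\ rd P' G.
Proof.
elim=> [|{}k P1 e h1 IH he] G b nab.
  by move=> _; exists 1; split; [exact: plin0 | exact: rd_refl1].
case=> Q hQ; rewrite smulA in hQ.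
have neb : b - e != 0.
  by rewrite subr_eq0; apply/eqP => ebe; apply: nab; rewrite ebe.
have hb : b = e + (b - e) by rewrite addrC subrK.
move: hQ; rewrite {1}hb => hQ.
have [Q2 [hG hG2]] := pass_lin neb (ex_intro _ _ hQ).
have hc : sm Q2 ('X - (cjx (b - e) (e + (b - e)))%:P) = sm Q P1.
  apply: (smul_cancel (monic_neq0 (monicXsubC e))).
  by rewrite -hG2 hQ.
rewrite -hb in hc.
have nab' : ~ cj a (cjx (b - e) b).
  by move=> h; apply: nab; apply: (conj_trans h); apply: conj_sym; exact: cjx_conj.
have hd : rd P1 (sm Q2 ('X - (cjx (b - e) b)%:P)) by exists Q; rewrite hc.
have [P1' [hP1' [W hW]]] := IH Q2 _ nab' hd.
exists (sm P1' ('X - (cjx (b - e) e)%:P)); split.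
  by apply: plinS => //; apply: (conj_trans he); exact: cjx_conj.
by exists W; rewrite hG hW smulA.
Qed.


Lemma keyB n (a : 'I_n -> R) (Ha : forall i j : 'I_n, i != j -> ~ cj (a i) (a j)) m :
  forall (F : {poly R}) (Ps : 'I_n -> {poly R}) (ks : 'I_n -> nat),
  (\sum_(i < n) ks i)%N = m -> F != 0 -> (forall i, plin (a i) (ks i) (Ps i)) ->
  (forall i, rd (Ps i) F) -> (m <= sdeg F)%N.
Proof.
elim: m => [|m IH] F Ps ks hsum nF hP hD; first by [].
have [j hj] : exists j, (0 < ks j)%N.
  case: (boolP [exists j, (0 < ks j)%N]) => [/existsP [j hj]|/existsPn h]; first by exists j.
  by move: hsum; rewrite big1 // => i _; move: (h i); rewrite lt0n negbK => /eqP.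
move: (hP j); case E: (ks j) hj => [|k] // _ /plinS_inv [P1 [e [h1 he hPj]]].
have [Q hQ] := hD j; rewrite hPj smulA in hQ.
set F1 := sm Q P1 in hQ.
have nX : 'X - e%:P != 0 := monic_neq0 (monicXsubC e).
have nF1 : F1 != 0 by apply: contraNneq nF => h0; rewrite hQ h0 smul0l.
have hsz : sdeg F = (sdeg F1).+1.
  have [h _] := size_smul nF1 nX; rewrite /sdeg hQ h size_XsubC.
  by move: nF1; rewrite -size_poly_gt0; lia.
have ex : forall i, exists P', plin (a i) (if i == j then k else ks i) P' /\ rd P' F1.
  move=> i; case: eqP => [->|/eqP nij].
    by exists P1; split => //; exists Q.
  apply: (keyA (hP i) (b := e)).
    by move=> hie; apply: (Ha i j nij); exact: conj_trans hie (conj_sym he).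
  by rewrite -hQ; exact: hD i.
have [fP hfP] := fin_all_exists ex.
rewrite hsz ltnS.
apply: (IH F1 fP (fun i => if i == j then k else ks i)) => //.
- rewrite (bigD1 j) //= E in hsum; rewrite (bigD1 j) //= eqxx.
  rewrite (eq_bigr (fun i => ks i)); first by move: hsum; rewrite addSn => -[].
  by move=> i /negPf ->.
- by move=> i; case: (hfP i).
- by move=> i; case: (hfP i).
Qed.

Lemma spowS' (p : {poly R}) r : spow s d p r.+1 = sm p (spow s d p r).
Proof.
elim: r => [|r IH]; first by rewrite /spow /= smul1l smul1r.
have -> : spow s d p r.+2 = sm (spow s d p r.+1) p by [].
by rewrite {1}IH -smulA.
Qed.

Lemma spow_plin (a : R) r : plin a r (spow s d ('X - a%:P) r).
Proof.
elim: r => [|r IH]; first exact: plin0.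
by apply: plinS => //; exact: conj_refl.
Qed.

Lemma lin_lem (V : {poly R}) (e : R) : exists c V', sm ('X - c%:P) V = sm V' ('X - e%:P).
Proof.
have [Q [g hV]] := sdiv_lin V e.
set c := (s g * e + d g) * g^-1.
have hc : c * g = s g * e + d g.
  case: (eqVneq g 0) => [->|ng]; first by rewrite mulr0 rmorph0 d0 mul0r add0r.
  by rewrite /c mulrVK // unitP.
exists c, (sm ('X - c%:P) Q + (s g)%:P).
rewrite hV smulDr smulA smulDl smulC; congr (_ + _).
rewrite smulBl smulC -{1}(expr1 'X) smulXn /= -[g%:P]mulr1 xmC -(expr0 'X) xmXn.
rewrite expr0 expr1 !mulr1 -polyCM hc mulrBr -polyCM polyCD opprD addrA.
by rewrite (addrAC _ (d g)%:P) addrK.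
Qed.

Lemma exists_mult (G : {poly R}) (e : R) (r : nat) : G != 0 ->
  exists U : {poly R}, [/\ U != 0, (size U <= r.+1)%N & rd (spow s d ('X - e%:P) r) (sm U G)].
Proof.
move=> nG; elim: r => [|r [U1 [nU1 hU1 [V1 hV1]]]].
  by exists 1; split; rewrite ?oner_neq0 ?size_poly1 //; exact: rd_refl1.
have [c [V' hc]] := lin_lem V1 e.
have nXc : 'X - c%:P != 0 := monic_neq0 (monicXsubC c).
exists (sm ('X - c%:P) U1); split.
- exact: smul_neq0.
- by have [-> _] := size_smul nXc nU1; rewrite size_XsubC add2n ltnS.
- exists V'; rewrite -smulA hV1 smulA hc -smulA -spowS'.
  done.
Qed.


Lemma common_mult n (a : 'I_n -> R) (r : 'I_n -> nat) (l : seq 'I_n) :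
  exists M : {poly R}, [/\ M != 0, (size M <= (\sum_(i <- l) r i).+1)%N &
    forall i, i \in l -> rd (spow s d ('X - (a i)%:P) (r i)) M].
Proof.
elim: l => [|i l [M [nM hM hD]]].
  by exists 1; split; rewrite ?oner_neq0 ?size_poly1 ?big_nil.
have [U [nU hU [W hW]]] := exists_mult (a i) (r i) nM.
exists (sm U M); split.
- exact: smul_neq0.
- have [-> _] := size_smul nU nM; rewrite big_cons.
  move: hU hM; rewrite -!size_poly_gt0 in nU nM; lia.
- move=> j; rewrite inE => /orP [/eqP ->|hj]; first by exists W.
  by have [A ->] := hD j hj; exists (sm U A); rewrite smulA.
Qed.

Lemma llcm_exists n (g : 'I_n -> {poly R}) (M0 : {poly R}) :
  M0 != 0 -> (forall i, rd (g i) M0) -> exists L, is_monic_llcm s d g L.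
Proof.
move: {2}(size M0) (leqnn (size M0)) => k; elim: k M0 => [|k IH] M hM nM hc.
  by move: nM; rewrite -size_poly_leq0 hM.
set c := (lead_coef M)^-1.
have nlc : lead_coef M != 0 by rewrite lead_coef_eq0.
have nc : c != 0 by rewrite invr_eq0.
set L := sm c%:P M.
have mL : L \is monic.
  by apply/monicP; rewrite /L smulC lead_Cmul // mulVr // unitP.
have hLc : forall i, rd (g i) L.
  by move=> i; have [A hA] := hc i; exists (sm c%:P A); rewrite /L hA smulA.
have hsL : size L = size M by rewrite /L smulC size_Cmul'.
case: (classic (forall M', (forall i, rd (g i) M') -> rd L M')) => hall.
  by exists L; split.
have [M' hM'] : exists M', ~ ((forall i, rd (g i) M') -> rd L M').
  by apply: not_all_ex_not.
have [hM'c hM'n] : (forall i, rd (g i) M') /\ ~ rd L M'.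
  by split; [apply: NNPP => h; apply: hM'; move=> /h | move=> h; apply: hM'].
have [Q [Rm [hdiv hs]]] := sdiv M' mL.
have nRm : Rm != 0.
  by apply/eqP => h0; apply: hM'n; exists Q; rewrite hdiv h0 addr0.
apply: (IH Rm) => //.
  by rewrite -ltnS; apply: leq_trans hM; rewrite -hsL.
move=> i; have [A hA] := hM'c i; have [B hB] := hLc i.
exists (A - sm Q B); rewrite smulBl -hA -smulA -hB.
by rewrite hdiv addrC addKr.
Qed.

Lemma main_sec n (a : 'I_n -> R) (r : 'I_n -> nat)
  (Ha : forall i j : 'I_n, i != j -> ~ sd_conj s d (a i) (a j))
  (Hr : forall i, (0 < r i)%N)
  (F : {poly R}) (HF : F != 0)
  (Hdiv : forall i, rdvd s d (spow s d ('X - (a i)%:P) (r i)) F) :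
  (\sum_(i < n) r i <= sdeg F)%N /\
  (exists L, is_monic_llcm s d (fun i => spow s d ('X - (a i)%:P) (r i)) L) /\
  (forall L, is_monic_llcm s d (fun i => spow s d ('X - (a i)%:P) (r i)) L ->
     ((\sum_(i < n) r i)%N = sdeg F <->
      exists2 c : R, c != 0 & F = smul s d c%:P L)).
Proof.
set g := fun i => spow s d ('X - (a i)%:P) (r i).
have B : forall G, G != 0 -> (forall i, rd (g i) G) -> (\sum_(i < n) r i <= sdeg G)%N.
  move=> G nG hG; apply: (keyB Ha (Ps := g) (ks := r)) => //.
  by move=> i; exact: spow_plin.
have [M0 [nM0 hM0 hD0]] := common_mult a r (index_enum 'I_n).
have hD0' : forall i, rd (g i) M0 by move=> i; apply: hD0; rewrite mem_index_enum.
split; first exact: B.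
split; first exact: llcm_exists nM0 hD0'.
move=> L [mL [hLd hLmin]].
have nL := monic_neq0 mL.
have h1 := B L nL hLd.
have [Q hQ] := hLmin M0 hD0'.
have nQ : Q != 0 by apply: contraNneq nM0 => h0; rewrite hQ h0 smul0l.
have h2 : (size L <= size M0)%N by rewrite hQ; exact: size_smul_ge.
have hL : sdeg L = (\sum_(i < n) r i)%N.
  apply/eqP; rewrite eqn_leq h1 andbT /sdeg.
  move: hM0 h2 nL; rewrite -size_poly_gt0 /index_enum /=.
  rewrite -big_enum /= enumT. lia.
split.
- move=> heq; have [P hP] := hLmin F Hdiv.
  have nP : P != 0 by apply: contraNneq HF => h0; rewrite hP h0 smul0l.
  have [hs _] := size_smul nP nL.
  have hsP : size P = 1%N.
    move: heq; rewrite -hL /sdeg hP hs; move: nP nL; rewrite -!size_poly_gt0; lia.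
  exists P`_0; last by rewrite hP {1}(@size1_polyC _ P) ?hsP.
  by apply: contraNneq nP => h0; rewrite (@size1_polyC _ P) ?hsP // h0.
- case=> c nc ->; rewrite smulC /sdeg size_Cmul' //.
Qed.

End Skew.

Unset Implicit Arguments.
Theorem mainTheorem8 (R : unitRingType) (HR : is_division_ring R)
  (s : {rmorphism R -> R}) (d : R -> R) (Hd : is_sigma_derivation s d)
  (n : nat) (a : 'I_n -> R) (r : 'I_n -> nat)
  (Ha : forall i j : 'I_n, i != j -> ~ sd_conj s d (a i) (a j))
  (Hr : forall i, (0 < r i)%N)
  (F : {poly R}) (HF : F != 0)
  (Hdiv : forall i, rdvd s d (spow s d ('X - (a i)%:P) (r i)) F) :
  (\sum_(i < n) r i <= sdeg F)%N /\
  (exists L, is_monic_llcm s d (fun i => spow s d ('X - (a i)%:P) (r i)) L) /\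
  (forall L, is_monic_llcm s d (fun i => spow s d ('X - (a i)%:P) (r i)) L ->
     ((\sum_(i < n) r i)%N = sdeg F <->
      exists2 c : R, c != 0 & F = smul s d c%:P L)).
Proof. exact: (main_sec HR Hd Ha Hr HF Hdiv). Qed.
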